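(* Let $G$ be a finite group and let $k$ be an integer with $2 \leq k < d(G)$. Then $G$ is $k$-flexible if and only if $G/\mathrm{Cyc}(G)$ is $k$-flexible.
   Context: For a finite group $H$, $d(H)$ denotes the minimal size of a generating set of $H$. For an integer $1 \leq k \leq d(H)$, a finite group $H$ is called $k$-flexible if for any $x_1,\dots,x_k \in H$ with $d(\langle x_1,\dots,x_k\rangle)=k$ there exist $x_{k+1},\dots,x_{d(H)} \in H$ such that $\langle x_1,\dots,x_{d(H)}\rangle = H$. The cycliciser of $G$ is $\mathrm{Cyc}(G) = \{c \in G \mid \langle c,g\rangle \text{ is cyclic for all } g \in G\}$; it is a normal subgroup of $G$. *)

(* Defs.v *)
From mathcomp Require Import all_boot all_fingroup all_solvable.
Set Implicit Arguments.
Unset Strict Implicit.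
Unset Printing Implicit Defensive.
Local Open Scope group_scope.

(* d(H) is MathComp's gen_rank H = 'm(H) (abelian.v): the minimal size of
   a set B with <<B>> = H. *)

Definition Cyc (gT : finGroupType) (G : {set gT}) : {set gT} :=
  [set c in G | [forall g in G, cyclic <<[set c; g]>>]].

Definition flexible (gT : finGroupType) (k : nat) (H : {set gT}) : Prop :=
  (1 <= k <= gen_rank H)%N /\
  forall x : k.-tuple gT, {subset x <= H} ->
    gen_rank <<[set:: x]>> = k ->
    exists y : (gen_rank H - k).-tuple gT,
      {subset y <= H} /\ <<[set:: x ++ y]>> = H.

(* Main.v *)
Require Import Defs.
From mathcomp Require Import all_boot all_fingroup all_solvable.
Set Implicit Arguments. Unset Strict Implicit. Unset Printing Implicit Defensive.
Lemma coprime_by_primes m n : 0 < n ->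
  (forall p, prime p -> p %| n -> p %| m -> False) -> coprime m n.
Proof.
move=> n0 H; rewrite /coprime; have g0 : 0 < gcdn m n by rewrite gcdn_gt0 n0 orbT.
case: (boolP (1 < gcdn m n)) => [g1|]; last first.
  by rewrite -leqNgt => g; rewrite eqn_leq g g0.
exfalso; apply: (H (pdiv (gcdn m n))); first exact: pdiv_prime.
  exact: dvdn_trans (pdiv_dvd _) (dvdn_gcdr _ _).
exact: dvdn_trans (pdiv_dvd _) (dvdn_gcdl _ _).
Qed.

Lemma arith_shift a d n : 0 < n ->
  (forall p, prime p -> p %| n -> p %| a -> p %| d -> False) ->
  exists t, coprime (a + d * t) n.
Proof.
move=> n0 H; exists (n`_[pred p | ~~ (p %| a)]).
apply: coprime_by_primes => // p pp pn.
have key : (p %| n`_[pred p | ~~ (p %| a)]) = ~~ (p %| a).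
  have := pi_of_part [pred p | ~~ (p %| a)] n0 p.
  rewrite /= !inE /= !mem_primes pp n0 pn part_gt0 /= => <-; done.
case pa: (p %| a).
  rewrite dvdn_addr // Euclid_dvdM // key pa orbF => pd.
  exact: H pp pn pa pd.
by rewrite dvdn_addl ?pa // dvdn_mull // key pa.
Qed.

Local Open Scope group_scope.


Lemma grank_cyclic (gT : finGroupType) (K : {set gT}) : cyclic K -> gen_rank K <= 1.
Proof. by case/cyclicP=> g ->; apply: (leq_trans (grank_min _)); rewrite cards1. Qed.

Section S.
Variable gT : finGroupType.
Implicit Types (G H N : {group gT}) (x y g c : gT).

Lemma mem_gen2l x y : x \in <<[set x; y]>>.
Proof. by apply: mem_gen; rewrite !inE eqxx. Qed.
Lemma mem_gen2r x y : y \in <<[set x; y]>>.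
Proof. by apply: mem_gen; rewrite !inE eqxx orbT. Qed.

Lemma gen2_sub x y (K : {group gT}) : x \in K -> y \in K -> <<[set x; y]>> \subset K.
Proof.
by move=> xK yK; rewrite gen_subG; apply/subsetP=> z; rewrite !inE => /orP[]/eqP->.
Qed.

Lemma CycP G c : reflect (c \in G /\ forall g, g \in G -> cyclic <<[set c; g]>>) (c \in Cyc G).
Proof.
rewrite /Cyc inE; apply: (iffP andP) => [[cG /forall_inP H]|[cG H]]; split => //.
by apply/forall_inP.
Qed.

Lemma Cyc_sub G : Cyc G \subset G.
Proof. by apply/subsetP=> c /CycP[]. Qed.

Lemma cyc2 x y (K : {group gT}) : x \in K -> y \in K -> cyclic <<[set x; y]>> ->
  exists2 w, w \in K & (x \in <[w]>) && (y \in <[w]>).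
Proof.
move=> xK yK /cyclicP[w Ew]; exists w.
  by rewrite -cycle_subG -Ew gen2_sub.
by rewrite -Ew mem_gen2l mem_gen2r.
Qed.

Lemma Cyc_group_set G : group_set (Cyc G).
Proof.
apply/group_setP; split.
  apply/CycP; split=> // g gG; apply: cyclicS (cycle_cyclic g).
  by apply: gen2_sub => //; rewrite cycle_id.
move=> c d /CycP[cG Hc] /CycP[dG Hd]; apply/CycP; split; first by rewrite groupM.
move=> g gG; have [w wG /andP[dw gw]] := cyc2 dG gG (Hd g gG).
have [v vG /andP[cv wv]] := cyc2 cG wG (Hc w wG).
apply: cyclicS (cycle_cyclic v); apply: gen2_sub.
  rewrite groupM //; apply: (subsetP _ _ dw); by rewrite cycle_subG.
by apply: (subsetP _ _ gw); rewrite cycle_subG.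
Qed.

Canonical Cyc_group G := Group (Cyc_group_set G).

Lemma Cyc_cent G : Cyc G \subset 'C(G).
Proof.
apply/subsetP=> c /CycP[cG Hc]; apply/centP=> g gG.
have /cyclic_abelian/centsP ab := Hc g gG.
exact: (ab _ (mem_gen2l c g) _ (mem_gen2r c g)).
Qed.

Lemma Cyc_norm G : G \subset 'N(Cyc G).
Proof. by apply: subset_trans (cent_sub _); rewrite centsC Cyc_cent. Qed.

Lemma w_exists G g : g \in G ->
  exists w, [/\ w \in G, g \in <[w]> & Cyc G \subset <[w]>].
Proof.
move=> gG.
have P0 : (g \in G) && (g \in <[g]>) by rewrite gG cycle_id.
case: (@arg_maxnP gT g (fun w => (w \in G) && (g \in <[w]>)) (fun w => #[w]) P0) => w /andP[wG gw] wmax.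
exists w; split=> //; apply/subsetP=> c /CycP[cG Hc].
have [v vG /andP[cv wv]] := cyc2 cG wG (Hc w wG).
have sub : <[w]> \subset <[v]> by rewrite cycle_subG.
have gv : g \in <[v]> by apply: (subsetP sub).
have := wmax v; rewrite vG gv => /(_ isT) le.
have E : <[w]> = <[v]> by apply/eqP; rewrite eqEcard sub.
by rewrite E.
Qed.


Lemma F_lemma (N : {group gT}) x : cyclic <<x |: N>> ->
  exists2 c, c \in N & N \subset <[x * c]>.
Proof.
case/cyclicP=> u Eu.
have xu : x \in <[u]> by rewrite -Eu mem_gen // setU11.
have Nu : N \subset <[u]> by rewrite -Eu sub_gen // subsetUr.
have /cyclicP[v Ev] : cyclic N by apply: cyclicS Nu (cycle_cyclic u).
have : v \in <[u]> by apply: (subsetP Nu); rewrite Ev cycle_id.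
case/cycleP=> d Ed; case/cycleP: xu => a Ea.
have uin : u \in <[x]> * N.
  rewrite -comm_joingE; last first.
    apply: centC; apply: (sub_abelian_cent2 (cycle_abelian u)) => //.
    by rewrite cycle_subG Ea mem_cycle.
  by rewrite joing_idl /joing Eu cycle_id.
case/mulsgP: uin => y z /cycleP[i ->] zN Eu'.
have : z \in <[v]> by rewrite -Ev.
case/cycleP=> j Ez.
have key : (a * i + d * j == 1 %[mod #[u]]).
  by rewrite -eq_expg_mod_order expg1 expgD !expgM -Ea -Ed -Ez -Eu'.
have nopr : forall p, prime p -> p %| #[u] -> p %| a -> p %| d -> False.
  move=> p pp pu pa pd.
  have : (a * i + d * j) %% p = 1 %% p.
    by rewrite -(modn_dvdm _ pu) (eqP key) modn_dvdm.
  rewrite (eqP (_ : p %| a * i + d * j)) ?modn_small ?prime_gt1 //.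
  by rewrite dvdn_add // dvdn_mulr.
have [t ct] := arith_shift (order_gt0 u) nopr.
exists (v ^+ t); first by rewrite Ev mem_cycle.
have : generator <[u]> (u ^+ (a + d * t)) by rewrite generator_coprime coprime_sym.
rewrite /generator => /eqP E.
by rewrite Ea Ed -expgM -expgD -E.
Qed.

Lemma Cyc_restr G H : H \subset G -> Cyc G :&: H \subset Cyc H.
Proof.
move=> sHG; apply/subsetP=> c; rewrite inE => /andP[/CycP[_ Hc] cH].
apply/CycP; split=> // g gH; exact: Hc (subsetP sHG g gH).
Qed.

Lemma D_lemma H y0 (S : {set gT}) : y0 \in H -> S \subset H ->
  H \subset <<(y0 |: S) :|: Cyc H>> ->
  exists2 c, c \in Cyc H & <<(y0 * c) |: S>> = H.
Proof.
move=> y0H sSH sH.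
have [w [wH y0w Cw]] := w_exists y0H.
have cyc : cyclic <<y0 |: Cyc_group H>>.
  apply: cyclicS (cycle_cyclic w); rewrite gen_subG subUset sub1set y0w.
  exact: Cw.
have [c cC NC] := F_lemma cyc.
have cH : c \in H by apply: (subsetP (Cyc_sub H)).
exists c => //; apply/eqP; rewrite eqEsubset; apply/andP; split.
  by rewrite gen_subG subUset sub1set groupM.
apply: (subset_trans sH); rewrite gen_subG.
have y0cK : y0 * c \in <<(y0 * c) |: S>> by rewrite mem_gen // setU11.
have CK : Cyc H \subset <<(y0 * c) |: S>>.
  apply: (subset_trans NC); rewrite cycle_subG //.
rewrite !subUset CK sub1set andbT; apply/andP; split.
  rewrite -{1}(mulgK c y0) groupM ?groupV //; exact: (subsetP CK).
apply: sub_gen; exact: subsetUr.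
Qed.

Lemma rank_quo G H : H \subset G -> ~~ cyclic H ->
  gen_rank (H / Cyc G) = gen_rank H.
Proof.
move=> sHG ncH.
have nH : H \subset 'N(Cyc G) := subset_trans sHG (Cyc_norm G).
apply/eqP; rewrite eqn_leq; apply/andP; split.
  have [B EB cB] := grank_witness H.
  have sBN : B \subset 'N(Cyc G) by rewrite (subset_trans _ nH) // -EB subset_gen.
  have -> : H / Cyc G = <<coset (Cyc G) @* B>> by rewrite -EB /quotient morphim_gen.
  by rewrite -cB (leq_trans (grank_min _)) // morphimEsub // leq_imset_card.
have [Bb EBb cBb] := grank_witness (H / Cyc G).
rewrite -cBb.
pose f := fun b => odflt 1 [pick h in H | coset (Cyc G) h == b].
have fP : forall b, b \in H / Cyc G -> f b \in H /\ coset (Cyc G) (f b) = b.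
  move=> b /morphimP[h hN hH ->]; rewrite /f; case: pickP => [h' /andP[h'H /eqP e]|].
    by split.
  by move/(_ h); rewrite hH eqxx.
have sBbH : Bb \subset H / Cyc G by rewrite -EBb subset_gen.
pose B := f @: Bb.
have sBH : B \subset H.
  by apply/subsetP => _ /imsetP[b bB ->]; exact: (fP b (subsetP sBbH b bB)).1.
have imB : coset (Cyc G) @: B = Bb.
  rewrite -imset_comp (eq_in_imset (g := id)) ?imset_id // => b bB /=.
  exact: (fP b (subsetP sBbH b bB)).2.
have genB : H \subset Cyc G * <<B>>.
  rewrite -quotientK ?(subset_trans _ nH) ?gen_subG //.
  have -> : <<B>> / Cyc G = H / Cyc G.
    by rewrite /quotient morphim_gen ?(subset_trans sBH nH) // morphimEsub
               ?(subset_trans sBH nH) // imB EBb.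
  apply/subsetP=> h hH; apply: mem_morphpre; first exact: (subsetP nH).
  exact: mem_quotient.
case: (set_0Vmem Bb) => [Bb0 | [b0 b0B]].
  exfalso; move: EBb; rewrite Bb0 gen0 => /esym/eqP.
  rewrite -subG1 quotient_sub1 // => sHC.
  have [w [_ _ Cw]] := w_exists (group1 G).
  by move: ncH; rewrite (cyclicS (subset_trans sHC Cw) (cycle_cyclic w)).
pose y0 := f b0.
have y0B : y0 \in B by apply: imset_f.
have y0H : y0 \in H by apply: (subsetP sBH).
have := @D_lemma H y0 (B :\ y0) y0H (subset_trans (subD1set B y0) sBH).
rewrite setD1K //.
case.
  apply/subsetP=> h hH; move: (subsetP genB h hH) => /mulsgP[c b cN bB Eh].
  have bH : b \in H by apply: (subsetP _ _ bB); rewrite gen_subG.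
  have cH : c \in H by rewrite (_ : c = h * b^-1) ?groupM ?groupV // Eh mulgK.
  have cC : c \in Cyc H by apply: (subsetP (Cyc_restr sHG)); rewrite inE cN cH.
  rewrite Eh groupM //; first by rewrite mem_gen // inE cC orbT.
  by apply: (subsetP (genS (subsetUl _ _))).
move=> c cC Ec; rewrite -Ec (leq_trans (grank_min _)) //.
rewrite (leq_trans _ (leq_imset_card f Bb)) // (cardsD1 y0 B) y0B cardsU1.
exact: leq_add (leq_b1 _) (leqnn _).
Qed.

Definition lift (A H : {set gT}) (b : coset_of A) : gT :=
  odflt 1 [pick h in H | coset A h == b].

Lemma liftP (A H : {set gT}) b : b \in H / A ->
  lift H b \in H /\ coset A (lift H b) = b.
Proof.
move=> /morphimP[h hN hH ->]; rewrite /lift; case: pickP => [h' /andP[h'H /eqP e]|].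
  by split.
by move/(_ h); rewrite hH eqxx.
Qed.

Lemma quo_gen_seq (A : {group gT}) (s : seq gT) : {subset s <= 'N(A)} ->
  <<[set:: s]>> / A = <<[set:: map (coset A) s]>>.
Proof.
move=> sN; have sN' : [set:: s] \subset 'N(A).
  by apply/subsetP=> z; rewrite inE; apply: sN.
rewrite /quotient morphim_gen // morphimEsub //; congr <<_>>.
apply/setP=> y; rewrite inE; apply/imsetP/mapP => [[z]|[z]]; rewrite ?inE => zs ->;
  by exists z; rewrite ?inE.
Qed.


Lemma seq_sub (K : {group gT}) (s : seq gT) : {subset s <= K} -> <<[set:: s]>> \subset K.
Proof. by move=> sK; rewrite gen_subG; apply/subsetP=> z; rewrite inE; apply: sK. Qed.

Lemma main_lemma G k : 2 <= k -> k < gen_rank G ->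
  (flexible k G <-> flexible k (G / Cyc G)).
Proof.
move=> k2 kG.
have nG := Cyc_norm G.
have ncG : ~~ cyclic G.
  apply/negP=> cG; have r1 := grank_cyclic cG.
  by move: (leq_trans (leq_trans k2 (ltnW kG)) r1).
have eR : gen_rank (G / Cyc G) = gen_rank G := rank_quo (subxx G) ncG.
split.
  case=> /andP[k1 kd] flexG; split; first by rewrite eR k1.
  move=> xb xbG rxb; rewrite eR.
  pose x := map_tuple (lift G) xb.
  have xG : {subset x <= G}.
    by move=> _ /mapP[b bx ->]; exact: (liftP (xbG b bx)).1.
  have mapx : map (coset (Cyc G)) x = xb.
    rewrite /= -map_comp; apply: map_id_in => b bx /=; exact: (liftP (xbG b bx)).2.
  have sHG : <<[set:: x]>> \subset G by apply: seq_sub.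
  have HN : <<[set:: x]>> / Cyc G = <<[set:: xb]>>.
    by rewrite quo_gen_seq ?mapx // => z /xG zG; apply: (subsetP nG).
  have ncH : ~~ cyclic <<[set:: x]>>.
    apply/negP => /(quotient_cyclic (Cyc G)); rewrite HN => cq.
    by have := grank_cyclic cq; rewrite rxb => /(leq_trans k2).
  have rx : gen_rank <<[set:: x]>> = k by rewrite -(rank_quo sHG ncH) HN.
  have [y [yG Ey]] := flexG x xG rx.
  exists (map_tuple (coset (Cyc G)) y); split.
    by move=> _ /mapP[z zy ->]; apply: mem_quotient; apply: yG.
  have : G / Cyc G = <<[set:: x ++ y]>> / Cyc G by rewrite Ey.
  rewrite quo_gen_seq.
    by rewrite map_cat mapx => ->.
  move=> z; rewrite mem_cat => /orP[/xG|/yG] zG; exact: (subsetP nG).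
case=> /andP[k1 kd] flexQ; split; first by rewrite -eR k1.
rewrite eR in flexQ.
move=> x xG rx.
have sHG : <<[set:: x]>> \subset G by apply: seq_sub.
have ncH : ~~ cyclic <<[set:: x]>>.
  apply/negP => cq.
  by have := grank_cyclic cq; rewrite rx => /(leq_trans k2).
pose xb := map_tuple (coset (Cyc G)) x.
have xbG : {subset xb <= G / Cyc G}.
  by move=> _ /mapP[z zx ->]; apply: mem_quotient; apply: xG.
have HN : <<[set:: x]>> / Cyc G = <<[set:: xb]>>.
  by rewrite quo_gen_seq // => z /xG zG; apply: (subsetP nG).
have rxb : gen_rank <<[set:: xb]>> = k by rewrite -HN rank_quo.
have [yb [ybG Eyb]] := flexQ xb xbG rxb.
have mapy : map (coset (Cyc G)) (map (lift G) yb) = yb.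
  rewrite -map_comp; apply: map_id_in => b bx /=; exact: (liftP (ybG b bx)).2.
have y'G : {subset map (lift G) yb <= G}.
  by move=> _ /mapP[b bx ->]; exact: (liftP (ybG b bx)).1.
have sz : size (map (lift G) yb) = gen_rank G - k by rewrite size_map size_tuple.
move: mapy y'G sz; case: (map (lift G) yb) => [|y0 t].
  by move=> _ _ /esym/eqP; rewrite subn_eq0 leqNgt kG.
move=> mapy y'G sz.
have y0G : y0 \in G by apply: y'G; rewrite inE eqxx.
have sS : [set:: x ++ t] \subset G.
  apply/subsetP=> z; rewrite inE mem_cat => /orP[/xG //|zt].
  by apply: y'G; rewrite inE zt orbT.
have xyN : {subset x ++ y0 :: t <= 'N(Cyc G)}.
  move=> z; rewrite mem_cat => /orP[/xG|/y'G] zG; exact: (subsetP nG).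
have genG : G \subset <<(y0 |: [set:: x ++ t]) :|: Cyc G>>.
  have -> : y0 |: [set:: x ++ t] = [set:: x ++ y0 :: t].
    by apply/setP=> z; rewrite !inE !mem_cat inE orbCA.
  have LN : <<[set:: x ++ y0 :: t]>> \subset 'N(Cyc G).
    by rewrite gen_subG; apply/subsetP=> z; rewrite inE => /xyN.
  have EL : <<[set:: x ++ y0 :: t]>> / Cyc G = G / Cyc G.
    by rewrite quo_gen_seq // map_cat mapy -Eyb.
  have sG : G \subset Cyc G * <<[set:: x ++ y0 :: t]>>.
    rewrite -quotientK // EL; apply/subsetP=> g gG.
    by apply: mem_morphpre; [apply: (subsetP nG) | apply: mem_quotient].
  apply/subsetP=> g /(subsetP sG) /mulsgP[c b cC bL ->].
  rewrite groupM //; first by rewrite mem_gen // inE cC orbT.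
  by apply: (subsetP (genS (subsetUl _ _))).
have [c cC Ec] := D_lemma y0G sS genG.
have cG : c \in G := subsetP (Cyc_sub G) c cC.
have szy : size ((y0 * c) :: t) == gen_rank G - k by rewrite -sz.
exists (Tuple szy); split.
  move=> z /=; rewrite inE => /orP[/eqP->|zt]; first by rewrite groupM.
  by apply: y'G; rewrite inE zt orbT.
apply: etrans Ec; congr <<_>>; apply/setP=> z; rewrite !inE !mem_cat inE /=.
by rewrite orbCA.
Qed.

End S.

Unset Implicit Arguments.

Theorem lemma2p4 (gT : finGroupType) (G : {group gT}) (k : nat) :
  (2 <= k)%N -> (k < gen_rank G)%N ->
  (flexible k G <-> flexible k (G / Cyc G)%g).
Proof. exact: main_lemma. Qed.
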